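(* Let $N>1$ be an integer, let $0<\epsilon<e$, let $\tfrac12<\beta<1$, and let $k$ be an integer with $\beta^kN>1$. Set $K=\lceil \log(e/\epsilon)/\log(\beta/(1-\beta))\rceil$. Then there exist functions $c_1,\dots,c_K:[0,N]\to\mathbb{R}$ and $r_1,\dots,r_K:[\beta^kN,\beta^{k-1}N]\to\mathbb{R}$ such that $g_k(x,y)=\sum_{i=1}^K c_i(x)r_i(y)$ satisfies \[ \left|\Lambda\!\left(\tfrac{x+y}{2}\right)-g_k(x,y)\right|\le\epsilon\qquad\text{for all }(x,y)\in[0,N]\times[\beta^kN,\beta^{k-1}N], \] where $\Lambda(z)=\Gamma(z+1/2)/\Gamma(z+1)$.
   Context: $\Gamma$ denotes the gamma function; $e$ is Euler's number; $\log$ is the natural logarithm. A function of the form $\sum_{i=1}^K c_i(x)r_i(y)$ is said to have rank at most $K$. *)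

(* Defs.v *)
From Stdlib Require Import Reals Lra Lia ZArith List ClassicalEpsilon.
Open Scope R_scope.

Definition gauss_seq (z : R) (n : nat) : R :=
  INR (fact n) * Rpower (INR n) z / prod_f_R0 (fun k => z + INR k) n.

(* Euler's Gamma function via the Gauss limit formula
   Gamma z = lim_{n->oo} n! n^z / (z (z+1) ... (z+n)), valid for z > 0
   (indeed for all z not a non-positive integer). *)
Definition Gamma (z : R) : R :=
  epsilon (inhabits 0) (fun l => Un_cv (gauss_seq z) l).

Definition Lambda (z : R) : R := Gamma (z + / 2) / Gamma (z + 1).

Definition Rceil (x : R) : Z := (- Int_part (- x))%Z.

Definition sum1K (K : nat) (f : nat -> R) : R :=
  fold_right Rplus 0 (map f (seq 1 K)).

(* Main.v *)
Require Import Defs.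
From Stdlib Require Import Reals Lra Lia ZArith List ClassicalEpsilon.
Open Scope R_scope.

Definition Dl (z : R) (f : R -> R) : R -> R := fun u => (f u - f z) / (u - z).

Fixpoint DD (l : list R) (f : R -> R) : R -> R :=
  match l with nil => f | z :: l' => DD l' (Dl z f) end.

Lemma DD_ext : forall l f g t, (forall u, In u (t :: l) -> f u = g u) ->
  DD l f t = DD l g t.
Proof.
  induction l as [|z l IH]; intros f g t H; simpl.
  - apply H; simpl; auto.
  - apply IH. intros u Hu. unfold Dl. rewrite (H u), (H z); auto.
    + simpl; auto.
    + simpl in Hu |- *; tauto.
Qed.

Lemma DD_lin : forall l f g a b t,
  DD l (fun u => a * f u + b * g u) t = a * DD l f t + b * DD l g t.
Proof.
  induction l as [|z l IH]; intros f g a b t; simpl; auto.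
  rewrite <- IH. apply DD_ext. intros u _. unfold Dl. unfold Rdiv. ring.
Qed.

Lemma DD_zero : forall l t, DD l (fun _ => 0) t = 0.
Proof.
  induction l as [|z l IH]; intros t; simpl; auto.
  rewrite <- (IH t). apply DD_ext. intros u _. unfold Dl, Rdiv. ring.
Qed.

Lemma DD_const : forall l c t, l <> nil -> DD l (fun _ => c) t = 0.
Proof.
  intros [|z l] c t H; [congruence|]. simpl.
  rewrite <- (DD_zero l t). apply DD_ext. intros u _. unfold Dl, Rdiv. ring.
Qed.

Definition SC (D : R -> Prop) (f : R -> R) : Prop :=
  forall l t, NoDup (t :: l) -> D t -> Forall D l ->
    0 <= (-1) ^ length l * DD l f t.

Lemma SC_ext : forall D f g, SC D f -> (forall u, D u -> f u = g u) -> SC D g.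
Proof.
  intros D f g Hf Heq l t Hn Ht Hl.
  rewrite <- (DD_ext l f g t). apply Hf; auto.
  intros u [Hu|Hu]. subst; auto. apply Heq. rewrite Forall_forall in Hl; auto.
Qed.

Lemma SC_restrict : forall (D D' : R -> Prop) f, (forall u, D' u -> D u) -> SC D f -> SC D' f.
Proof.
  intros D D' f HD Hf l t Hn Ht Hl. apply Hf; auto.
  rewrite Forall_forall in *; auto.
Qed.

Lemma SC_nonneg : forall D f u, SC D f -> D u -> 0 <= f u.
Proof.
  intros D f u Hf Hu. assert (H := Hf nil u). simpl in H.
  assert (0 <= 1 * f u) by (apply H; auto; constructor; [simpl; tauto|constructor]). lra.
Qed.

Lemma SC_const : forall D c, 0 <= c -> SC D (fun _ => c).
Proof.
  intros D c Hc [|z l] t Hn Ht Hl; simpl.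
  - lra.
  - rewrite (DD_ext l _ (fun _ => 0)). rewrite DD_zero. lra.
    intros; unfold Dl, Rdiv; ring.
Qed.

Lemma SC_lin : forall D f g a b, 0 <= a -> 0 <= b -> SC D f -> SC D g ->
  SC D (fun u => a * f u + b * g u).
Proof.
  intros D f g a b Ha Hb Hf Hg l t Hn Ht Hl. rewrite DD_lin.
  specialize (Hf l t Hn Ht Hl). specialize (Hg l t Hn Ht Hl).
  replace ((-1) ^ length l * (a * DD l f t + b * DD l g t)) with
    (a * ((-1) ^ length l * DD l f t) + b * ((-1) ^ length l * DD l g t)) by ring.
  apply Rplus_le_le_0_compat; apply Rmult_le_pos; auto.
Qed.

Lemma SC_Dl : forall D f z, SC D f -> D z ->
  SC (fun u => D u /\ u <> z) (fun u => - Dl z f u).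
Proof.
  intros D f z Hf Hz l t Hn [Ht Htz] Hl.
  assert (E: DD l (fun u => - Dl z f u) t = DD l (fun u => -1 * Dl z f u + 0 * Dl z f u) t).
  { apply DD_ext. intros; ring. }
  rewrite E, DD_lin.
  assert (H := Hf (z :: l) t). simpl in H.
  replace ((-1) ^ length l * (-1 * DD l (Dl z f) t + 0 * DD l (Dl z f) t))
    with (-1 * (-1) ^ length l * DD l (Dl z f) t) by ring.
  apply H; auto.
  - inversion Hn; subst. constructor.
    + intros [H1|H1]; [congruence|tauto].
    + constructor; auto. rewrite Forall_forall in Hl. intros Hzl. destruct (Hl z Hzl); auto.
  - constructor; auto. rewrite Forall_forall in *. intros u Hu; apply Hl; auto.
Qed.

Lemma Rdiv_le_0_compat : forall a b, 0 <= a -> 0 < b -> 0 <= a / b.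
Proof. intros a b Ha Hb. unfold Rdiv. apply Rmult_le_pos; auto. left; apply Rinv_0_lt_compat; auto. Qed.
Lemma Rdiv_lt_0_compat : forall a b, 0 < a -> 0 < b -> 0 < a / b.
Proof. intros a b Ha Hb. unfold Rdiv. apply Rmult_lt_0_compat; auto. apply Rinv_0_lt_compat; auto. Qed.

Lemma SC_mult_aux : forall l D f g t, SC D f -> SC D g ->
  NoDup (t :: l) -> D t -> Forall D l ->
  0 <= (-1) ^ length l * DD l (fun u => f u * g u) t.
Proof.
  induction l as [|z l IH]; intros D f g t Hf Hg Hn Ht Hl.
  - simpl. rewrite Rmult_1_l. apply Rmult_le_pos; eapply SC_nonneg; eauto.
  - simpl.
    inversion Hl; subst. inversion Hn; subst. inversion H4; subst.
    assert (Hzt : t <> z) by (intro; subst; apply H3; simpl; auto).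
    set (D' := fun u => D u /\ u <> z).
    assert (E : DD l (Dl z (fun u => f u * g u)) t =
      -1 * DD l (fun u => (- Dl z f u) * g u) t + (- f z) * DD l (fun u => - Dl z g u) t).
    { rewrite <- DD_lin. apply DD_ext. intros u _. unfold Dl, Rdiv. ring. }
    rewrite E.
    replace (-1 * (-1) ^ length l * (-1 * DD l (fun u => - Dl z f u * g u) t +
       - f z * DD l (fun u => - Dl z g u) t)) with
      ((-1) ^ length l * DD l (fun u => - Dl z f u * g u) t +
       f z * ((-1) ^ length l * DD l (fun u => - Dl z g u) t)) by ring.
    assert (HD' : Forall D' l).
    { rewrite Forall_forall in *. intros u Hu. split; auto. intro; subst; auto. }
    apply Rplus_le_le_0_compat.
    + apply (IH D'); auto.
      all: first [apply SC_Dl; auto | apply (SC_restrict D); auto; intros u [Hu _]; auto | constructor; auto; intros Hi; apply H3; simpl; auto | split; auto].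
    + apply Rmult_le_pos. eapply SC_nonneg; eauto.
      apply (SC_Dl D g z); auto.
      all: first [constructor; auto; intros Hi; apply H3; simpl; auto | split; auto].
Qed.

Lemma SC_mult : forall D f g, SC D f -> SC D g -> SC D (fun u => f u * g u).
Proof. intros D f g Hf Hg l t; apply SC_mult_aux; auto. Qed.

Lemma SC_inv_aux : forall l (D : R -> Prop) a c t, (forall u, D u -> - a < u) -> 0 <= c ->
  NoDup (t :: l) -> D t -> Forall D l ->
  0 <= (-1) ^ length l * DD l (fun u => c / (u + a)) t.
Proof.
  induction l as [|z l IH]; intros D a c t HD Hc Hn Ht Hl.
  - simpl. rewrite Rmult_1_l. apply Rdiv_le_0_compat; auto. specialize (HD t Ht); lra.
  - simpl. inversion Hl; subst. inversion Hn; subst. inversion H4; subst.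
    assert (Hzt : t <> z) by (intro; subst; apply H3; simpl; auto).
    assert (Hza := HD z H1).
    rewrite (DD_ext l _ (fun u => (-1) * ((c / (z + a)) / (u + a)) + 0 * 0)).
    + rewrite DD_lin. 
      replace (-1 * (-1) ^ length l * (-1 * DD l (fun u => c / (z + a) / (u + a)) t + 0 * DD l (fun _ => 0) t))
       with ((-1) ^ length l * DD l (fun u => c / (z + a) / (u + a)) t) by ring.
      apply (IH (fun u => D u /\ u <> z)); auto.
      all: first [intros u [Hu _]; auto; fail | apply Rdiv_le_0_compat; auto; lra | constructor; auto; intros Hi; apply H3; simpl; auto; fail | split; auto; fail |
        rewrite Forall_forall in *; intros u Hu; split; auto; intro; subst; auto].
    + intros u Hu. assert (u <> z /\ D u).
      { destruct Hu as [Hu|Hu]. subst; auto. rewrite Forall_forall in H2.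
        split; [intro; subst; auto| auto]. }
      destruct H as [Huz HDu]. assert (Hua := HD u HDu).
      unfold Dl. field. repeat split; lra.
Qed.

Lemma SC_inv : forall (D : R -> Prop) a, (forall u, D u -> - a < u) -> SC D (fun u => / (u + a)).
Proof.
  intros D a HD l t Hn Ht Hl.
  rewrite (DD_ext l _ (fun u => 1 / (u + a))). apply (SC_inv_aux l D); auto; lra.
  intros; unfold Rdiv; ring.
Qed.

Fixpoint prodw (l : list R) (w : R) : R :=
  match l with nil => 1 | z :: l' => (z - w) * prodw l' w end.

Lemma SC_bound : forall l D f w t, SC D f -> D w -> D t -> Forall D l ->
  NoDup (t :: l) -> w < t -> Forall (fun z => w < z) l ->
  (-1) ^ length l * DD l f t * prodw l w <= f w.
Proof.
  induction l as [|z l IH]; intros D f w t Hf Hw Ht Hl Hn Hwt Hwl.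
  - simpl. assert (H := Hf (w :: nil) t). simpl in H.
    assert (0 <= -1 * 1 * ((f t - f w) / (t - w))).
    { apply H; auto. constructor. simpl; intros [H1|[]]; lra. constructor; [simpl; tauto|constructor]. }
    assert ((f t - f w) / (t - w) <= 0) by lra.
    assert (f t - f w <= 0).
    { destruct (Rle_dec (f t - f w) 0); auto.
      assert (0 < (f t - f w) / (t - w)) by (apply Rdiv_lt_0_compat; lra). lra. }
    lra.
  - simpl. inversion Hl; subst. inversion Hn; subst. inversion H4; subst. inversion Hwl; subst.
    assert (Hzt : t <> z) by (intro; subst; apply H3; simpl; auto).
    assert (IH1 := IH (fun u => D u /\ u <> z) (fun u => - Dl z f u) w t).
    assert (E : DD l (fun u => - Dl z f u) t = - DD l (Dl z f) t).
    { rewrite (DD_ext l _ (fun u => -1 * Dl z f u + 0 * Dl z f u)). rewrite DD_lin. ring.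
      intros; ring. }
    rewrite E in IH1.
    assert (Hfz : 0 <= f z) by (eapply SC_nonneg; eauto).
    assert (Hp : (-1) ^ length l * - DD l (Dl z f) t * prodw l w <= - Dl z f w).
    { apply IH1; auto.
      - apply SC_Dl; auto.
      - split; auto; lra.
      - rewrite Forall_forall in *. intros u Hu. split; auto. intro; subst; auto.
      - constructor; auto. intros Hi; apply H3; simpl; auto. }
    unfold Dl in Hp.
    replace (- ((f w - f z) / (w - z))) with ((f w - f z) / (z - w)) in Hp by (field; lra).
    apply Rmult_le_compat_r with (r := z - w) in Hp; [|lra].
    replace ((f w - f z) / (z - w) * (z - w)) with (f w - f z) in Hp by (field; lra).
    replace (-1 * (-1) ^ length l * DD l (Dl z f) t * ((z - w) * prodw l w)) with
      ((-1) ^ length l * - DD l (Dl z f) t * prodw l w * (z - w)) by ring.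
    unfold Dl in *; lra.
Qed.

Fixpoint newton (l : list R) (f : R -> R) (t : R) : R :=
  match l with nil => 0 | z :: l' => f z + (t - z) * newton l' (Dl z f) t end.
Fixpoint prodl (l : list R) (t : R) : R :=
  match l with nil => 1 | z :: l' => (t - z) * prodl l' t end.
Fixpoint coef (l : list R) (f : R -> R) (j : nat) : R :=
  match l with nil => 0 | z :: l' =>
    match j with O => f z | S j' => coef l' (Dl z f) j' end end.

Lemma newton_id : forall l f t, f t = newton l f t + prodl l t * DD l f t.
Proof.
  induction l as [|z l IH]; intros f t; simpl. ring.
  transitivity (f z + (t - z) * (newton l (Dl z f) t + prodl l t * DD l (Dl z f) t)); [|ring].
  rewrite <- IH.
  destruct (Req_dec t z). subst. ring. unfold Dl. field. lra.
Qed.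

Lemma newton_sum : forall l f t, newton l f t =
  fold_right Rplus 0 (map (fun i => coef l f i * prodl (firstn i l) t) (seq 0 (length l))).
Proof.
  induction l as [|z l IH]; intros f t; simpl. auto.
  rewrite <- seq_shift, map_map. simpl. rewrite IH.
  f_equal. ring.
  generalize (seq 0 (length l)). intros s. induction s as [|i s IHs]; simpl. ring.
  rewrite Rmult_plus_distr_l, IHs. ring.
Qed.

Lemma cv_const : forall c, Un_cv (fun _ => c) c.
Proof. intros c e He. exists 0%nat. intros. unfold Rdist. rewrite Rminus_eq_0, Rabs_R0; auto. Qed.

Lemma newton_cv : forall (D : R -> Prop) l fn f t,
  (forall u, D u -> Un_cv (fun n => fn n u) (f u)) -> Forall D l ->
  Un_cv (fun n => newton l (fn n) t) (newton l f t).
Proof.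
  intros D; induction l as [|z l IH]; intros fn f t Hc Hl; simpl.
  - apply cv_const.
  - inversion Hl; subst. apply CV_plus. apply Hc; auto.
    apply CV_mult. apply cv_const.
    apply (IH (fun n => Dl z (fn n))); auto.
    intros u Hu. unfold Dl. unfold Rdiv. apply CV_mult. apply CV_minus; apply Hc; auto.
    apply cv_const.
Qed.

Lemma prodl_bound : forall l t h, 0 <= h -> Forall (fun z => Rabs (t - z) <= h) l ->
  Rabs (prodl l t) <= h ^ length l.
Proof.
  induction l as [|z l IH]; intros t h Hh Hl; simpl. rewrite Rabs_R1; lra.
  inversion Hl; subst. rewrite Rabs_mult. apply Rmult_le_compat; auto; apply Rabs_pos.
Qed.

Lemma prodw_bound : forall l w Y, 0 <= Y -> Forall (fun z => Y <= z - w) l ->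
  Y ^ length l <= prodw l w.
Proof.
  induction l as [|z l IH]; intros w Y HY Hl; simpl. lra.
  inversion Hl; subst. apply Rmult_le_compat; auto. apply pow_le; auto.
Qed.

Lemma lim_le : forall u l B N0, Un_cv u l -> (forall n, (n >= N0)%nat -> Rabs (u n) <= B) ->
  Rabs l <= B.
Proof.
  intros u l B N0 Hu HB. destruct (Rle_dec (Rabs l) B); auto.
  destruct (Hu (Rabs l - B)) as [N HN]. lra.
  specialize (HN (max N N0) ltac:(lia)). specialize (HB (max N N0) ltac:(lia)).
  unfold Rdist in HN. assert (H := Rabs_triang_inv l (u (max N N0))).
  rewrite <- Rabs_Ropp in HN. replace (- (u (Init.Nat.max N N0) - l)) with (l - u (max N N0)) in HN by ring.
  lra.
Qed.

Lemma exp_le : forall x y, x <= y -> exp x <= exp y.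
Proof. intros x y [H|H]. left; apply exp_increasing; auto. subst; lra. Qed.

Lemma ln_le_m1 : forall y, 0 < y -> ln y <= y - 1.
Proof. intros y Hy. assert (H := exp_ineq1_le (ln y)). rewrite exp_ln in H; lra. Qed.

Lemma ln_diff : forall a b, 0 < a -> 0 < b -> ln a - ln b = ln (a / b).
Proof. intros a b Ha Hb. unfold Rdiv. rewrite ln_mult.
  rewrite ln_Rinv; auto; try ring. all: try apply Rinv_0_lt_compat; auto. Qed.

Lemma prod_pos : forall f n, (forall k, 0 < f k) -> 0 < prod_f_R0 f n.
Proof. intros f n H. induction n; simpl; auto. apply Rmult_lt_0_compat; auto. Qed.

Lemma gauss_pos : forall z n, 0 < z -> 0 < gauss_seq z n.
Proof.
  intros z n Hz. unfold gauss_seq, Rpower. apply Rdiv_lt_0_compat.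
  apply Rmult_lt_0_compat. apply INR_fact_lt_0. apply exp_pos.
  apply prod_pos. intros k. assert (H := pos_INR k). lra.
Qed.

Lemma gauss_step : forall z m, 0 < z -> (1 <= m)%nat ->
  gauss_seq z (S m) = gauss_seq z m *
    (exp (z * (ln (INR (S m)) - ln (INR m))) * (INR (S m) / (z + INR (S m)))).
Proof.
  intros z m Hz Hm. unfold gauss_seq, Rpower.
  rewrite fact_simpl, mult_INR.
  replace (prod_f_R0 (fun k => z + INR k) (S m)) with (prod_f_R0 (fun k => z + INR k) m * (z + INR (S m))) by reflexivity.
  replace (z * ln (INR (S m))) with (z * ln (INR m) + z * (ln (INR (S m)) - ln (INR m))) by ring.
  rewrite exp_plus.
  assert (0 < prod_f_R0 (fun k => z + INR k) m) by (apply prod_pos; intros k; assert (H := pos_INR k); lra).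
  assert (0 < INR (S m)) by (apply lt_0_INR; lia).
  assert (INR (Factorial.fact m) <> 0) by apply INR_fact_neq_0.
  field. repeat split; lra.
Qed.

Lemma ln_step : forall m, (1 <= m)%nat ->
  / INR (S m) <= ln (INR (S m)) - ln (INR m) <= / INR m.
Proof.
  intros m Hm. assert (Hm0 : 0 < INR m) by (apply lt_0_INR; lia).
  rewrite S_INR. split.
  - assert (H := ln_le_m1 (INR m / (INR m + 1)) ltac:(apply Rdiv_lt_0_compat; lra)).
    rewrite <- ln_diff in H; try lra.
    replace (INR m / (INR m + 1) - 1) with (- / (INR m + 1)) in H by (field; lra). lra.
  - assert (H := ln_le_m1 ((INR m + 1) / INR m) ltac:(apply Rdiv_lt_0_compat; lra)).
    rewrite <- ln_diff in H; try lra.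
    replace ((INR m + 1) / INR m - 1) with (/ INR m) in H by (field; lra). lra.
Qed.

Lemma ratio_ge1 : forall z m, 0 < z -> (1 <= m)%nat ->
  1 <= exp (z * (ln (INR (S m)) - ln (INR m))) * (INR (S m) / (z + INR (S m))).
Proof.
  intros z m Hz Hm. destruct (ln_step m Hm) as [H1 H2].
  assert (HS : 0 < INR (S m)) by (apply lt_0_INR; lia).
  assert (E1 : exp (z / INR (S m)) <= exp (z * (ln (INR (S m)) - ln (INR m)))).
  { apply exp_le. unfold Rdiv. apply Rmult_le_compat_l; lra. }
  assert (E2 := exp_ineq1_le (z / INR (S m))).
  replace (1 + z / INR (S m)) with ((z + INR (S m)) / INR (S m)) in E2 by (field; lra).
  assert (0 < INR (S m) / (z + INR (S m))) by (apply Rdiv_lt_0_compat; lra).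
  apply Rle_trans with ((z + INR (S m)) / INR (S m) * (INR (S m) / (z + INR (S m)))).
  right; field; lra.
  apply Rmult_le_compat_r; lra.
Qed.

Lemma ratio_le : forall z m, 0 < z -> (1 <= m)%nat ->
  exp (z * (ln (INR (S m)) - ln (INR m))) * (INR (S m) / (z + INR (S m))) <=
  exp (z * (z + 1) / INR m - z * (z + 1) / INR (S m)).
Proof.
  intros z m Hz Hm. destruct (ln_step m Hm) as [H1 H2].
  assert (HS : 0 < INR (S m)) by (apply lt_0_INR; lia).
  assert (Hm0 : 0 < INR m) by (apply lt_0_INR; lia).
  assert (HSm : INR (S m) = INR m + 1) by apply S_INR.
  assert (E1 : exp (z * (ln (INR (S m)) - ln (INR m))) <= exp (z / INR m)).
  { apply exp_le. unfold Rdiv. apply Rmult_le_compat_l; lra. }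
  assert (E2 : INR (S m) / (z + INR (S m)) <= exp (- (z / (z + INR (S m))))).
  { assert (H := ln_le_m1 (INR (S m) / (z + INR (S m))) ltac:(apply Rdiv_lt_0_compat; lra)).
    replace (INR (S m) / (z + INR (S m)) - 1) with (- (z / (z + INR (S m)))) in H by (field; lra).
    rewrite <- (exp_ln (INR (S m) / (z + INR (S m)))) by (apply Rdiv_lt_0_compat; lra).
    apply exp_le; auto. }
  apply Rle_trans with (exp (z / INR m) * exp (- (z / (z + INR (S m))))).
  apply Rmult_le_compat; auto; try (left; apply exp_pos). left; apply Rdiv_lt_0_compat; lra.
  rewrite <- exp_plus. apply exp_le.
  replace (z / INR m + - (z / (z + INR (S m)))) with (z * (z + 1) * / (INR m * (z + INR m + 1)))
    by (rewrite HSm; field; lra).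
  replace (z * (z + 1) / INR m - z * (z + 1) / INR (S m)) with (z * (z + 1) * / (INR m * (INR m + 1)))
    by (rewrite HSm; field; lra).
  apply Rmult_le_compat_l. nra.
  apply Rinv_le_contravar. nra. nra.
Qed.

Lemma Un_cv_ext : forall u v l, (forall n, u n = v n) -> Un_cv u l -> Un_cv v l.
Proof. intros u v l H Hu e He. destruct (Hu e He) as [N HN]. exists N. intros n Hn. rewrite <- H; auto. Qed.

Lemma gauss_cv : forall z, 0 < z -> exists l, 0 < l /\ Un_cv (gauss_seq z) l.
Proof.
  intros z Hz. set (a := gauss_seq z). set (c := z * (z + 1)).
  assert (Hgrow : forall m, (1 <= m)%nat -> a m <= a (S m)).
  { intros m Hm. unfold a. rewrite gauss_step; auto.
    assert (H := ratio_ge1 z m Hz Hm). assert (H0 := gauss_pos z m Hz).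
    rewrite <- (Rmult_1_r (gauss_seq z m)) at 1. apply Rmult_le_compat_l; lra. }
  assert (Hdec : forall m, (1 <= m)%nat -> a (S m) * exp (c / INR (S m)) <= a m * exp (c / INR m)).
  { intros m Hm. unfold a. rewrite gauss_step; auto.
    assert (H := ratio_le z m Hz Hm). assert (H0 := gauss_pos z m Hz).
    rewrite Rmult_assoc. apply Rmult_le_compat_l. lra.
    replace (exp (c / INR m)) with (exp (z * (z + 1) / INR m - z * (z + 1) / INR (S m)) * exp (c / INR (S m))).
    apply Rmult_le_compat_r. left; apply exp_pos. auto.
    rewrite <- exp_plus. f_equal. unfold c. ring. }
  assert (Hbd : forall n, a (S n) * exp (c / INR (S n)) <= a 1%nat * exp (c / INR 1)).
  { induction n. lra. eapply Rle_trans; [apply Hdec; lia|]. auto. }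
  assert (Hc : 0 <= c) by (unfold c; nra).
  assert (Hub : forall n, a (S n) <= a 1%nat * exp c).
  { intros n. specialize (Hbd n). replace (c / INR 1) with c in Hbd by (simpl; field).
    assert (1 <= exp (c / INR (S n))).
    { assert (H := exp_ineq1_le (c / INR (S n))). assert (0 <= c / INR (S n)).
      apply Rdiv_le_0_compat; auto. apply lt_0_INR; lia. lra. }
    assert (H0 := gauss_pos z (S n) Hz). fold a in H0. nra. }
  set (u := fun n => a (S n)).
  assert (Hg : Un_growing u) by (intros n; unfold u; apply Hgrow; lia).
  assert (Hb : has_ub u).
  { exists (a 1%nat * exp c). intros x [i Hi]. subst. apply Hub. }
  destruct (growing_cv u Hg Hb) as [l Hl].
  exists l. split.
  - assert (H := growing_ineq u l Hg Hl 0%nat). unfold u in H.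
    assert (H0 := gauss_pos z 1 Hz). fold a in H0. lra.
  - intros e He. destruct (Hl e He) as [N HN]. exists (S N). intros n Hn.
    destruct n. lia. apply (HN n). lia.
Qed.

Lemma Gamma_cv : forall z, 0 < z -> 0 < Gamma z /\ Un_cv (gauss_seq z) (Gamma z).
Proof.
  intros z Hz. destruct (gauss_cv z Hz) as [l [Hl Hc]].
  assert (H : Un_cv (gauss_seq z) (Gamma z)).
  { unfold Gamma. apply epsilon_spec. eauto. }
  rewrite (UL_sequence _ _ _ H Hc). auto.
Qed.

Definition Pn (n : nat) (s : R) : R :=
  Rpower (INR n) (- / 2) * prod_f_R0 (fun k => (s + 1 + INR k) / (s + / 2 + INR k)) n.

Lemma prod_div : forall f g n, (forall k, g k <> 0) ->
  prod_f_R0 (fun k => f k / g k) n = prod_f_R0 f n / prod_f_R0 g n.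
Proof.
  intros f g n Hg. induction n; simpl. auto. rewrite IHn.
  assert (prod_f_R0 g n <> 0).
  { clear IHn. induction n; simpl; auto. }
  field. auto.
Qed.

Lemma gauss_ratio : forall s n, 0 < s ->
  gauss_seq (s + / 2) n / gauss_seq (s + 1) n = Pn n s.
Proof.
  intros s n Hs. unfold gauss_seq, Pn. rewrite prod_div.
  2: { intros k; assert (H := pos_INR k); lra. }
  replace (s + / 2) with ((s + 1) + - / 2) at 1 by field.
  rewrite Rpower_plus.
  replace (fun k => s + 1 + INR k) with (fun k => s + 1 + INR k) by auto.
  assert (0 < prod_f_R0 (fun k => s + / 2 + INR k) n) by (apply prod_pos; intros k; assert (HH := pos_INR k); lra).
  assert (0 < prod_f_R0 (fun k => s + 1 + INR k) n) by (apply prod_pos; intros k; assert (HH := pos_INR k); lra).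
  assert (0 < Rpower (INR n) (s + 1)) by (unfold Rpower; apply exp_pos).
  assert (INR (Factorial.fact n) <> 0) by apply INR_fact_neq_0.
  field. repeat split; lra.
Qed.

Lemma Lambda_cv : forall s, 0 < s -> Un_cv (fun n => Pn n s) (Lambda s).
Proof.
  intros s Hs. destruct (Gamma_cv (s + / 2)) as [Ha Hca]. lra.
  destruct (Gamma_cv (s + 1)) as [Hb Hcb]. lra.
  apply Un_cv_ext with (fun n => gauss_seq (s + / 2) n * / gauss_seq (s + 1) n).
  intros n; rewrite <- gauss_ratio; auto.
  unfold Lambda. apply CV_mult; auto.
  assert (Hc : continuity_pt (fun x => / x) (Gamma (s + 1))).
  { assert (H := continuity_pt_inv id (Gamma (s + 1))).
    apply H. apply derivable_continuous_pt. apply derivable_pt_id. unfold id; lra. }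
  apply (continuity_seq (fun x => / x)); auto.
Qed.

Lemma prod_le : forall f g n, (forall k, 0 <= f k) -> (forall k, f k <= g k) ->
  prod_f_R0 f n <= prod_f_R0 g n.
Proof.
  intros f g n Hf Hfg. induction n; simpl; auto.
  apply Rmult_le_compat; auto.
  clear IHn; induction n; simpl; auto. apply Rmult_le_pos; auto.
Qed.

Lemma Pn_mono : forall n s, 0 <= s -> Pn n s <= Pn n 0.
Proof.
  intros n s Hs. unfold Pn. apply Rmult_le_compat_l. unfold Rpower; left; apply exp_pos.
  apply prod_le.
  - intros k; assert (H := pos_INR k). apply Rdiv_le_0_compat; lra.
  - intros k; assert (H := pos_INR k).
    apply Rle_trans with (1 + (/ 2) / (s + / 2 + INR k)). right; field; lra.
    apply Rle_trans with (1 + (/ 2) / (0 + / 2 + INR k)). 2: right; field; lra.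
    apply Rplus_le_compat_l. unfold Rdiv. apply Rmult_le_compat_l. lra.
    apply Rinv_le_contravar; lra.
Qed.

Lemma Pn_nonneg : forall n s, 0 <= s -> 0 <= Pn n s.
Proof.
  intros n s Hs. unfold Pn. apply Rmult_le_pos. unfold Rpower; left; apply exp_pos.
  left; apply prod_pos. intros k; assert (H := pos_INR k). apply Rdiv_lt_0_compat; lra.
Qed.

Lemma Q_bound : forall n, (prod_f_R0 (fun k => (0 + 1 + INR k) / (0 + / 2 + INR k)) n) ^ 2 <= 4 * (INR n + 1).
Proof.
  induction n.
  - simpl. lra.
  - change (prod_f_R0 (fun k => (0 + 1 + INR k) / (0 + / 2 + INR k)) (S n)) with
      (prod_f_R0 (fun k => (0 + 1 + INR k) / (0 + / 2 + INR k)) n * ((0 + 1 + INR (S n)) / (0 + / 2 + INR (S n)))).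
    rewrite Rpow_mult_distr. rewrite S_INR. set (m := INR n). assert (Hm := pos_INR n). fold m in Hm.
    apply Rle_trans with (4 * (m + 1) * ((0 + 1 + (m + 1)) / (0 + / 2 + (m + 1))) ^ 2).
    apply Rmult_le_compat_r. apply pow2_ge_0. auto.
    replace (4 * (m + 1) * ((0 + 1 + (m + 1)) / (0 + / 2 + (m + 1))) ^ 2) with
      (4 * (m + 2) * ((m + 1) * (m + 2) / ((m + 3/2) * (m + 3/2)))) by (field; lra).
    rewrite <- (Rmult_1_r (4 * (m + 1 + 1))). replace (m + 1 + 1) with (m + 2) by ring.
    apply Rmult_le_compat_l. lra.
    apply Rmult_le_reg_r with ((m + 3/2) * (m + 3/2)). nra.
    unfold Rdiv. rewrite Rmult_assoc, Rinv_l. nra. nra.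
Qed.

Lemma e_gt : 5 < exp 1 * exp 1.
Proof.
  assert (H := exp_ineq1_le (/ 2)).
  assert (E : exp 1 = exp (/ 2) * exp (/ 2)) by (rewrite <- exp_plus; f_equal; field).
  rewrite E. set (a := exp (/ 2)) in *.
  assert (9/4 <= a * a) by nra. nra.
Qed.

Lemma Pn0_bound : forall n, (4 <= n)%nat -> Pn n 0 <= exp 1.
Proof.
  intros n Hn. assert (H4 : 4 <= INR n) by (replace 4 with (INR 4) by (simpl; ring); apply le_INR; auto).
  assert (HQ := Q_bound n).
  assert (Hsq : Rpower (INR n) (- / 2) * Rpower (INR n) (- / 2) = / INR n).
  { rewrite <- Rpower_plus. unfold Rpower. replace (- / 2 + - / 2) with (-1) by field.
    replace (-1 * ln (INR n)) with (- ln (INR n)) by ring. rewrite exp_Ropp, exp_ln; auto. lra. }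
  assert (Hsq2 : Pn n 0 * Pn n 0 <= 5).
  { unfold Pn. set (Q := prod_f_R0 (fun k => (0 + 1 + INR k) / (0 + / 2 + INR k)) n) in *.
    replace (Rpower (INR n) (- / 2) * Q * (Rpower (INR n) (- / 2) * Q)) with
      ((Rpower (INR n) (- / 2) * Rpower (INR n) (- / 2)) * Q ^ 2) by ring.
    rewrite Hsq. apply Rle_trans with (/ INR n * (4 * (INR n + 1))).
    apply Rmult_le_compat_l; auto. left; apply Rinv_0_lt_compat; lra.
    apply Rmult_le_reg_l with (INR n). lra. rewrite <- Rmult_assoc, Rinv_r by lra. nra. }
  assert (He := e_gt). assert (H0 := Pn_nonneg n 0 (Rle_refl 0)). assert (0 < exp 1) by apply exp_pos.
  nra.
Qed.

Lemma prod_ext : forall f g n, (forall k, f k = g k) -> prod_f_R0 f n = prod_f_R0 g n.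
Proof. intros f g n H; induction n; simpl; rewrite ?IHn, ?H; auto. Qed.

Lemma SC_prod : forall D (f : nat -> R -> R) n, (forall k, SC D (f k)) ->
  SC D (fun u => prod_f_R0 (fun k => f k u) n).
Proof.
  intros D f n H. induction n; simpl.
  - apply H.
  - apply (SC_mult D (fun u => prod_f_R0 (fun k => f k u) n) (f (S n))); auto.
Qed.

Lemma SC_Fn : forall x n, 0 <= x -> SC (fun u => 0 <= u) (fun u => Pn n ((x + u) / 2)).
Proof.
  intros x n Hx.
  apply SC_ext with (fun u => Rpower (INR n) (- / 2) *
     prod_f_R0 (fun k => 1 * 1 + 1 * / (u + (x + 1 + 2 * INR k))) n).
  - apply (SC_mult _ (fun _ => Rpower (INR n) (- / 2))).
    apply SC_const. unfold Rpower; left; apply exp_pos.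
    apply (SC_prod _ (fun k u => 1 * 1 + 1 * / (u + (x + 1 + 2 * INR k)))).
    intros k. apply SC_lin; try lra. apply SC_const; lra.
    apply SC_inv. intros u Hu. assert (H := pos_INR k). lra.
  - intros u Hu. unfold Pn. f_equal. apply prod_ext. intros k. assert (H := pos_INR k).
    field. lra.
Qed.

Lemma prodl_zero : forall l t, In t l -> prodl l t = 0.
Proof.
  induction l as [|z l IH]; intros t H; simpl in *. tauto.
  destruct H as [H|H]. subst. ring. rewrite IH; auto. ring.
Qed.

Lemma error_n : forall l x n Y h t, 0 <= x -> 0 < Y -> 0 <= h -> (4 <= n)%nat ->
  NoDup l -> Forall (fun z => Y <= z /\ Rabs (t - z) <= h) l -> Y <= t ->
  Rabs (Pn n ((x + t) / 2) - newton l (fun u => Pn n ((x + u) / 2)) t) <= exp 1 * (h / Y) ^ length l.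
Proof.
  intros l x n Y h t Hx HY Hh Hn Hl HF Ht.
  set (F := fun u => Pn n ((x + u) / 2)).
  assert (Hpos : 0 <= exp 1 * (h / Y) ^ length l).
  { apply Rmult_le_pos. left; apply exp_pos. apply pow_le. apply Rdiv_le_0_compat; lra. }
  assert (E := newton_id l F t). unfold F in E at 1.
  replace (Pn n ((x + t) / 2) - newton l F t) with (prodl l t * DD l F t) by lra.
  destruct (in_dec Req_EM_T t l) as [Hin|Hnin].
  - rewrite prodl_zero by auto. rewrite Rmult_0_l, Rabs_R0. auto.
  - assert (Hnd : NoDup (t :: l)) by (constructor; auto).
    assert (HSC := SC_Fn x n Hx). fold F in HSC.
    assert (HD : Forall (fun u => 0 <= u) l).
    { rewrite Forall_forall in *. intros u Hu. destruct (HF u Hu); lra. }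
    assert (HA := HSC l t Hnd ltac:(simpl; lra) HD).
    assert (HB := SC_bound l _ F 0 t HSC (Rle_refl 0) ltac:(simpl; lra) HD Hnd ltac:(lra)).
    assert (Hw : Forall (fun z => 0 < z) l).
    { rewrite Forall_forall in *. intros u Hu. destruct (HF u Hu); lra. }
    specialize (HB Hw).
    assert (HP1 := prodl_bound l t h Hh).
    assert (HP2 := prodw_bound l 0 Y ltac:(lra)).
    assert (HP1' : Rabs (prodl l t) <= h ^ length l).
    { apply HP1. rewrite Forall_forall in *. intros u Hu. destruct (HF u Hu); auto. }
    assert (HP2' : Y ^ length l <= prodw l 0).
    { apply HP2. rewrite Forall_forall in *. intros u Hu. destruct (HF u Hu); lra. }
    assert (HF0 : F 0 <= exp 1).
    { unfold F. apply Rle_trans with (Pn n 0). apply Pn_mono. lra. apply Pn0_bound; auto. }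
    set (A := (-1) ^ length l * DD l F t) in *.
    assert (Hsgn : (-1) ^ length l * (-1) ^ length l = 1).
    { rewrite <- Rpow_mult_distr. replace (-1 * -1) with 1 by ring. apply pow1. }
    assert (EDD : DD l F t = (-1) ^ length l * A).
    { unfold A. rewrite <- Rmult_assoc, Hsgn. ring. }
    rewrite EDD, Rabs_mult, Rabs_mult.
    assert (Habs : Rabs ((-1) ^ length l) = 1).
    { rewrite <- RPow_abs. replace (Rabs (-1)) with 1 by (unfold Rabs; destruct Rcase_abs; lra). apply pow1. }
    rewrite Habs, (Rabs_right A) by lra.
    assert (HYK : 0 < Y ^ length l) by (apply pow_lt; auto).
    assert (HAY : A * Y ^ length l <= exp 1).
    { apply Rle_trans with (A * prodw l 0). apply Rmult_le_compat_l; lra. lra. }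
    replace ((h / Y) ^ length l) with (h ^ length l / Y ^ length l) by (unfold Rdiv; rewrite Rpow_mult_distr, pow_inv; auto).
    apply Rle_trans with (h ^ length l * A).
    { rewrite Rmult_1_l. apply Rmult_le_compat_r; lra. }
    apply Rle_trans with (h ^ length l * (exp 1 / Y ^ length l)).
    { apply Rmult_le_compat_l. apply pow_le; auto.
      apply Rmult_le_reg_r with (Y ^ length l); auto. unfold Rdiv. rewrite Rmult_assoc, Rinv_l; lra. }
    right; field; lra.
Qed.

Lemma K_bound : forall eps beta, 0 < eps -> eps < exp 1 -> / 2 < beta -> beta < 1 ->
  let K := Z.to_nat (Rceil (ln (exp 1 / eps) / ln (beta / (1 - beta)))) in
  exp 1 * ((1 - beta) / beta) ^ K <= eps.
Proof.
  intros eps beta He1 He2 Hb1 Hb2 K.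
  set (a := ln (exp 1 / eps)). set (b := ln (beta / (1 - beta))).
  assert (Ha : 0 < a).
  { unfold a. rewrite <- ln_1. apply ln_increasing. lra.
    apply Rmult_lt_reg_r with eps; auto. unfold Rdiv. rewrite Rmult_assoc, Rinv_l; lra. }
  assert (Hb : 0 < b).
  { unfold b. rewrite <- ln_1. apply ln_increasing. lra.
    apply Rmult_lt_reg_r with (1 - beta). lra. unfold Rdiv. rewrite Rmult_assoc, Rinv_l; lra. }
  assert (HL : 0 < a / b) by (apply Rdiv_lt_0_compat; auto).
  assert (HK : a / b <= INR K).
  { unfold K. fold a b. unfold Rceil. destruct (base_Int_part (- (a / b))) as [H1 H2].
    assert (HZ : a / b <= IZR (- Int_part (- (a / b)))) by (rewrite opp_IZR; lra).
    rewrite INR_IZR_INZ, Z2Nat.id. auto.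
    apply le_IZR. lra. }
  assert (Hr : 0 < (1 - beta) / beta) by (apply Rdiv_lt_0_compat; lra).
  assert (Hlr : ln ((1 - beta) / beta) = - b).
  { unfold b. rewrite <- ln_Rinv. f_equal. field. lra. apply Rdiv_lt_0_compat; lra. }
  rewrite <- Rpower_pow by auto. unfold Rpower. rewrite Hlr.
  assert (exp (INR K * - b) <= exp (- a)).
  { apply exp_le. apply Rmult_le_compat_r with (r := b) in HK; [|lra].
    unfold Rdiv in HK. rewrite Rmult_assoc, Rinv_l in HK; lra. }
  assert (exp (- a) = eps / exp 1).
  { unfold a. rewrite exp_Ropp, exp_ln. field. split; lra. apply Rdiv_lt_0_compat; auto. apply exp_pos. }
  assert (0 < exp 1) by apply exp_pos.
  apply Rle_trans with (exp 1 * (eps / exp 1)). apply Rmult_le_compat_l; lra. right; field; lra.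
Qed.

Lemma sum1K_newton : forall l f t,
  sum1K (length l) (fun i => coef l f (i - 1) * prodl (firstn (i - 1) l) t) = newton l f t.
Proof.
  intros l f t. rewrite newton_sum. unfold sum1K. rewrite <- seq_shift, map_map.
  f_equal. apply map_ext. intros i. simpl. rewrite Nat.sub_0_r. auto.
Qed.

Theorem lemma3p4 (N : nat) (eps beta : R) (k : Z) :
  (1 < N)%nat ->
  0 < eps -> eps < exp 1 ->
  / 2 < beta -> beta < 1 ->
  powerRZ beta k * INR N > 1 ->
  let K := Z.to_nat (Rceil (ln (exp 1 / eps) / ln (beta / (1 - beta)))) in
  exists (c r : nat -> R -> R),
    forall x y : R,
      0 <= x <= INR N ->
      powerRZ beta k * INR N <= y <= powerRZ beta (k - 1) * INR N ->
      Rabs (Lambda ((x + y) / 2) - sum1K K (fun i => c i x * r i y)) <= eps.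
Proof.
  intros HN He1 He2 Hb1 Hb2 HY K.
  assert (HKb := K_bound eps beta He1 He2 Hb1 Hb2). fold K in HKb.
  set (Y := powerRZ beta k * INR N) in *.
  assert (EY' : powerRZ beta (k - 1) * INR N = Y / beta).
  { unfold Y. replace (k - 1)%Z with (k + -1)%Z by lia. rewrite powerRZ_add by lra.
    simpl. field. lra. }
  rewrite EY'.
  set (rho := (1 - beta) / beta) in *.
  set (h := rho * Y).
  assert (Hrho : 0 < rho) by (apply Rdiv_lt_0_compat; lra).
  assert (Hh : 0 < h) by (unfold h; apply Rmult_lt_0_compat; lra).
  assert (EYh : Y / beta = Y + h) by (unfold h, rho; field; lra).
  rewrite EYh.
  set (l := map (fun i => Y + h / (INR i + 1)) (seq 0 K)).
  assert (Hlen : length l = K) by (unfold l; rewrite length_map, length_seq; auto).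
  assert (Hin : forall z, In z l -> Y < z <= Y + h).
  { intros z Hz. unfold l in Hz. apply in_map_iff in Hz. destruct Hz as [i [Hi _]]. subst.
    assert (H := pos_INR i). split.
    - assert (0 < h / (INR i + 1)) by (apply Rdiv_lt_0_compat; lra). lra.
    - apply Rplus_le_compat_l. apply Rmult_le_reg_r with (INR i + 1). lra.
      unfold Rdiv. rewrite Rmult_assoc, Rinv_l by lra. nra. }
  assert (Hnd : NoDup l).
  { unfold l. apply NoDup_map_NoDup_ForallPairs; [|apply seq_NoDup].
    intros i j _ _ Hij. assert (Hi := pos_INR i). assert (Hj := pos_INR j).
    apply INR_eq.
    assert (h / (INR i + 1) = h / (INR j + 1)) by lra.
    assert (INR i + 1 = INR j + 1).
    { apply Rmult_eq_reg_l with h; [|lra].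
      apply Rmult_eq_reg_r with (/ ((INR i + 1) * (INR j + 1))).
      2: { apply Rinv_neq_0_compat. nra. }
      replace (h * (INR i + 1) * / ((INR i + 1) * (INR j + 1))) with (h / (INR j + 1)) by (field; lra).
      replace (h * (INR j + 1) * / ((INR i + 1) * (INR j + 1))) with (h / (INR i + 1)) by (field; lra).
      lra. }
    lra. }
  exists (fun i x => coef l (fun u => Lambda ((x + u) / 2)) (i - 1)).
  exists (fun i y => prodl (firstn (i - 1) l) y).
  intros x y Hx Hy.
  rewrite <- Hlen. rewrite sum1K_newton.
  set (Fn := fun n u => Pn n ((x + u) / 2)).
  assert (Hcv : Un_cv (fun n => Fn n y - newton l (Fn n) y)
    (Lambda ((x + y) / 2) - newton l (fun u => Lambda ((x + u) / 2)) y)).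
  { apply CV_minus. unfold Fn. apply Lambda_cv. lra.
    apply (newton_cv (fun u => 0 < u)).
    - intros u Hu. unfold Fn. apply Lambda_cv. lra.
    - rewrite Forall_forall. intros u Hu. destruct (Hin u Hu). lra. }
  apply Rle_trans with (exp 1 * rho ^ K); auto.
  apply (lim_le _ _ _ 4%nat Hcv).
  intros n Hn. unfold Fn.
  replace rho with (h / Y) by (unfold h; field; lra). rewrite <- Hlen.
  apply error_n; try lra; auto.
  rewrite Forall_forall. intros u Hu. destruct (Hin u Hu). split. lra.
  apply Rabs_le. lra.
Qed.
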